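(* For a class $K$ of algebras of type $\tau$, the following are equivalent: (a) the class $\mathbf S\mathbf P(\mathbf D(K))$ is a quasivariety; (b) $\mathbf D(K)$ is quasicompact; (c) $K$ is hyper-quasi-compact.
   Context: For a hypersubstitution $\sigma$ of type $\tau$ (assigning to each $n$-ary operation symbol an $n$-ary term of type $\tau$, extended to all terms), the derived algebra $\mathbf A^\sigma$ has the same universe as $\mathbf A$ and fundamental operations $\sigma(f_\gamma)^{\mathbf A}$; $\mathbf D(K)$ is the class of all derived algebras of members of $K$. $\mathbf S$ and $\mathbf P$ denote closure (up to isomorphism) under subalgebras and direct products. A quasivariety is a class of algebras defined by a set of quasi-identities (Horn implications $\bigwedge_{i<n}(t_i=s_i)\to(t_n=s_n)$ with finitely many premises). A class $L$ is quasicompact if whenever an implication $\bigwedge_{i\in I}(t_i=s_i)\rightarrow (t=s)$ with an arbitrary (possibly infinite) set of atomic premises, in any set of variables, holds in every algebra of $L$, there is a finite $F\subseteq I$ such that $\bigwedge_{i\in F}(t_i=s_i)\rightarrow(t=s)$ holds in every algebra of $L$. A class $K$ is hyper-quasi-compact if the same holds with ''holds'' replaced by ''is hypersatisfied'', where an implication is hypersatisfied in $\mathbf A$ if for every hypersubstitution $\sigma$ the implication $\bigwedge_{i}(\sigma(t_i)=\sigma(s_i))\rightarrow(\sigma(t)=\sigma(s))$ holds in $\mathbf A$. *)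

(* Defs.v *)
From mathcomp Require Import all_boot.
From Stdlib Require Import List.

Set Implicit Arguments.
Unset Strict Implicit.
Unset Printing Implicit Defensive.

Section UA.

Variables (F : Type) (ar : F -> nat).

(* Algebras of type tau (carriers may be empty). *)
Record algebra := Algebra {
  carrier :> Type;
  ops : forall f : F, ('I_(ar f) -> carrier) -> carrier }.
Arguments ops a f _ : clear implicits.

Inductive term (X : Type) : Type :=
| Var : X -> term X
| App : forall f : F, ('I_(ar f) -> term X) -> term X.
Arguments Var {X} x.
Arguments App {X} f ts.

Fixpoint eval (A : algebra) (X : Type) (v : X -> A) (t : term X) : A :=
  match t with
  | Var x => v x
  | App f ts => ops A f (fun i => eval v (ts i))
  end.

Fixpoint subst (X Y : Type) (s : X -> term Y) (t : term X) : term Y :=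
  match t with
  | Var x => s x
  | App f ts => App f (fun i => subst s (ts i))
  end.

(* Hypersubstitutions: each n-ary symbol goes to an n-ary term,
   i.e. a term in the variables x_0, ..., x_(n-1). *)
Definition hypersub := forall f : F, term 'I_(ar f).

Fixpoint hyp_ext (sigma : hypersub) (X : Type) (t : term X) : term X :=
  match t with
  | Var x => Var x
  | App f ts => subst (fun i => hyp_ext sigma (ts i)) (sigma f)
  end.

Definition derived (A : algebra) (sigma : hypersub) : algebra :=
  @Algebra (carrier A) (fun f args => eval args (sigma f)).

Definition class := algebra -> Prop.

Definition D (K : class) : class :=
  fun B => exists (A : algebra) (sigma : hypersub), K A /\ B = derived A sigma.

Definition hom (A B : algebra) (h : A -> B) : Prop :=
  forall (f : F) (args : 'I_(ar f) -> A), h (ops A f args) = ops B f (fun i => h (args i)).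

Definition iso (A B : algebra) : Prop :=
  exists h : A -> B, hom h /\ bijective h.

Definition closed (A : algebra) (P : A -> Prop) : Prop :=
  forall (f : F) (args : 'I_(ar f) -> A), (forall i, P (args i)) -> P (ops A f args).

Definition sub_alg (A : algebra) (P : A -> Prop) (HP : closed P) : algebra :=
  @Algebra {x : A | P x}
    (fun f args => exist P (ops A f (fun i => proj1_sig (args i)))
                     (HP f _ (fun i => proj2_sig (args i)))).

Definition prod_alg (I : Type) (A : I -> algebra) : algebra :=
  @Algebra (forall i : I, A i) (fun f args i => ops (A i) f (fun k => args k i)).

Definition S (L : class) : class :=
  fun B => exists (A : algebra) (P : A -> Prop) (HP : closed P),
    L A /\ iso B (sub_alg HP).

Definition P (L : class) : class :=
  fun B => exists (I : Type) (A : I -> algebra),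
    (forall i, L (A i)) /\ iso B (prod_alg A).

Record quasi_identity := QId {
  qi_prem : list (term nat * term nat);
  qi_concl : term nat * term nat }.

Definition sat_qi (A : algebra) (q : quasi_identity) : Prop :=
  forall v : nat -> A,
    (forall p, In p (qi_prem q) -> eval v p.1 = eval v p.2) ->
    eval v (qi_concl q).1 = eval v (qi_concl q).2.

Definition is_quasivariety (L : class) : Prop :=
  exists Sigma : quasi_identity -> Prop,
    forall A : algebra, L A <-> (forall q, Sigma q -> sat_qi A q).

Definition holds_impl (A : algebra) (X I : Type)
    (prem : I -> term X * term X) (Pi : I -> Prop) (c : term X * term X) : Prop :=
  forall v : X -> A,
    (forall i, Pi i -> eval v (prem i).1 = eval v (prem i).2) ->
    eval v c.1 = eval v c.2.

Definition hypersat_impl (A : algebra) (X I : Type)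
    (prem : I -> term X * term X) (Pi : I -> Prop) (c : term X * term X) : Prop :=
  forall sigma : hypersub,
    holds_impl A (fun i => (hyp_ext sigma (prem i).1, hyp_ext sigma (prem i).2)) Pi
      (hyp_ext sigma c.1, hyp_ext sigma c.2).

Definition quasicompact (L : class) : Prop :=
  forall (X I : Type) (prem : I -> term X * term X) (c : term X * term X),
    (forall A, L A -> holds_impl A prem (fun _ => True) c) ->
    exists l : list I, forall A, L A -> holds_impl A prem (fun i => In i l) c.

Definition hyper_quasi_compact (K : class) : Prop :=
  forall (X I : Type) (prem : I -> term X * term X) (c : term X * term X),
    (forall A, K A -> hypersat_impl A prem (fun _ => True) c) ->
    exists l : list I, forall A, K A -> hypersat_impl A prem (fun i => In i l) c.

End UA.

(* Main.v *)
Require Import Defs.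
From mathcomp Require Import all_boot.
From Stdlib Require Import List.
From Stdlib Require Import Classical ClassicalEpsilon FunctionalExtensionality PropExtensionality ProofIrrelevance.

Lemma In_enum n (i : 'I_n) : List.In i (enum 'I_n).
Proof.
have : i \in enum 'I_n by rewrite mem_enum.
elim: (enum 'I_n) => // j s IH; rewrite seq.in_cons => /orP [/eqP ->|/IH] /=; auto.
Qed.

Lemma sig_inj (T : Type) (Pr : T -> Prop) (x y : {z : T | Pr z}) :
  proj1_sig x = proj1_sig y -> x = y.
Proof.
case: x => x px; case: y => y py /= E; subst y; f_equal; apply: proof_irrelevance.
Qed.

Lemma eval_subst {F} {ar : F -> nat} (A : algebra ar) X Y (s : X -> term ar Y) (v : Y -> A) t :
  eval v (subst s t) = eval (fun x => eval v (s x)) t.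
Proof.
elim: t => [x|f ts IH] //=; f_equal; apply: functional_extensionality => i; exact: IH.
Qed.

Lemma eval_derived {F} {ar : F -> nat} (A : algebra ar) sigma X (v : X -> A) t :
  @eval _ _ (derived A sigma) X v t = eval v (hyp_ext sigma t).
Proof.
elim: t => [x|f ts IH] //=; rewrite eval_subst /=.
have -> : (fun i => @eval _ _ (derived A sigma) X v (ts i)) = (fun i => eval v (hyp_ext sigma (ts i))).
  by apply: functional_extensionality => i; exact: IH.
by [].
Qed.

Lemma holds_derived {F} {ar : F -> nat} (A : algebra ar) sigma X I
  (prem : I -> term ar X * term ar X) Pi c :
  holds_impl (derived A sigma) prem Pi c <->
  holds_impl A (fun i => (hyp_ext sigma (prem i).1, hyp_ext sigma (prem i).2)) Pi
     (hyp_ext sigma c.1, hyp_ext sigma c.2).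
Proof.
rewrite /holds_impl /=; split=> H v Hp.
- rewrite -!eval_derived; apply: H => i Hi; rewrite !eval_derived; exact: Hp.
- rewrite !eval_derived; apply: H => i Hi; rewrite -!eval_derived; exact: Hp.
Qed.

Lemma part2 {F} {ar : F -> nat} (K : class ar) : quasicompact (D K) <-> hyper_quasi_compact K.
Proof.
split=> H X I prem c Hall.
- case: (H X I prem c) => [|l Hl].
  + move=> B [A [sigma [KA ->]]]; apply/holds_derived; exact: Hall.
  + exists l => A KA sigma; apply/holds_derived; apply: Hl; by exists A, sigma.
- case: (H X I prem c) => [|l Hl].
  + move=> A KA sigma; apply/holds_derived; apply: Hall; by exists A, sigma.
  + exists l => B [A [sigma [KA ->]]]; apply/holds_derived; exact: Hl.
Qed.

Lemma hom_eval {F} {ar : F -> nat} (A B : algebra ar) (h : A -> B) X (v : X -> A) t :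
  hom h -> h (eval v t) = eval (fun x => h (v x)) t.
Proof.
move=> Hh; elim: t => [x|f ts IH] //=; rewrite Hh; f_equal.
apply: functional_extensionality => i; exact: IH.
Qed.

Lemma inj_hom_holds {F} {ar : F -> nat} (A B : algebra ar) (h : A -> B) X I
  (prem : I -> term ar X * term ar X) Pi c :
  hom h -> injective h -> holds_impl B prem Pi c -> holds_impl A prem Pi c.
Proof.
move=> Hh Hi HB v Hp; apply: Hi; rewrite !hom_eval //; apply: HB => i Pii.
by rewrite -!hom_eval // (Hp i Pii).
Qed.
Arguments inj_hom_holds {F ar A B h X I prem Pi c}.

Lemma prod_eval {F} {ar : F -> nat} (J : Type) (A : J -> algebra ar) X (v : X -> prod_alg A) t j :
  eval v t j = eval (fun x => v x j) t.
Proof.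
elim: t => [x|f ts IH] //=; f_equal; apply: functional_extensionality => i; exact: IH.
Qed.

Lemma prod_holds {F} {ar : F -> nat} (J : Type) (A : J -> algebra ar) X I
  (prem : I -> term ar X * term ar X) Pi c :
  (forall j, holds_impl (A j) prem Pi c) -> holds_impl (prod_alg A) prem Pi c.
Proof.
move=> H v Hp; apply: functional_extensionality_dep => j; rewrite !prod_eval.
apply: H => i Hi; by rewrite -!prod_eval (Hp i Hi).
Qed.

Lemma iso_inj {F} {ar : F -> nat} (A B : algebra ar) :
  iso A B -> exists h : A -> B, hom h /\ injective h.
Proof. move=> [h [Hh Hb]]; exists h; split => //; exact: bij_inj. Qed.

Lemma SP_holds {F} {ar : F -> nat} (L : class ar) X I
  (prem : I -> term ar X * term ar X) Pi c :
  (forall A, L A -> holds_impl A prem Pi c) ->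
  forall B, S (P L) B -> holds_impl B prem Pi c.
Proof.
move=> H B [A0 [PP [HP [[J [Ai [HAi iso0]]] isoB]]]].
have [h [Hh Hi]] := iso_inj _ _ isoB.
have [g [Hg Hgi]] := iso_inj _ _ iso0.
apply: (inj_hom_holds Hh Hi).
have := (@inj_hom_holds _ _ (sub_alg HP) A0 (@proj1_sig _ PP) X I prem Pi c) => Hs.
apply: Hs; [by move=> f args | by move=> x y; apply: sig_inj | ].
apply: (inj_hom_holds Hg Hgi); apply: prod_holds => j; exact: H.
Qed.

Lemma L_SP {F} {ar : F -> nat} (L : class ar) A : L A -> S (P L) A.
Proof.
move=> LA.
have HP : Defs.closed (fun _ : A => True) by [].
exists A, (fun _ => True), HP; split.
- exists unit, (fun _ => A); split => //.
  exists (fun x _ => x); split; first by [].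
  exists (fun p => p tt) => // p; apply: functional_extensionality_dep => -[] //.
- exists (fun x => exist _ x I); split.
  + by move=> f args; apply: sig_inj.
  + exists (@proj1_sig _ _) => // y; exact: sig_inj.
Qed.

Lemma sat_holds {F} {ar : F -> nat} (A : algebra ar) q :
  sat_qi A q <-> holds_impl A (fun p : term ar nat * term ar nat => p) (fun p => List.In p (qi_prem q)) (qi_concl q).
Proof. by []. Qed.

Fixpoint vars {F} {ar : F -> nat} {X : Type} (t : term ar X) : list X :=
  match t with
  | Var x => x :: nil
  | App f ts => List.concat (List.map (fun i => vars (ts i)) (enum 'I_(ar f)))
  end.

Lemma eval_agree {F} {ar : F -> nat} (A : algebra ar) X (v w : X -> A) t :
  (forall x, List.In x (vars t) -> v x = w x) -> eval v t = eval w t.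
Proof.
elim: t => [x|f ts IH] /= H; first by apply: H; left.
f_equal; apply: functional_extensionality => i; apply: IH => x Hx; apply: H.
apply/in_concat; exists (vars (ts i)); split => //; apply/in_map_iff; exists i; split => //.
exact: In_enum.
Qed.

Lemma separate {F} {ar : F -> nat} (L : class ar) (HL : quasicompact L) (A : algebra ar)
  (HA : forall q, (forall B, L B -> sat_qi B q) -> sat_qi A q) (a b : A) :
  a <> b -> exists (B : algebra ar) (v : A -> B), L B /\ hom v /\ v a <> v b.
Proof.
move=> nab; apply: NNPP => Hno.
pose I := {p : term ar A * term ar A | eval (fun x => x) p.1 = eval (fun x => x) p.2}.
pose prem := fun i : I => proj1_sig i.
pose c := (Var ar a, Var ar b).
case: (HL A I prem c) => [B LB v Hp|l Hl].
  apply: NNPP => Hne; apply: Hno; exists B, v; split => //; split => // f args.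
  pose p := (@App _ ar _ f (fun i => Var ar (args i)), Var ar (ops args)).
  have pP : eval (fun x => x) p.1 = eval (fun x => x) p.2 by [].
  symmetry; exact: (Hp (exist _ p pP) Logic.I).
pose xs := a :: b :: List.concat (List.map (fun i : I => vars (proj1_sig i).1 ++ vars (proj1_sig i).2) l).
have idxP : forall x : A, exists n, List.In x xs -> List.nth n xs a = x.
  move=> x; case: (classic (List.In x xs)) => [Hx|Hx]; last by exists 0.
  have [n [_ Hn]] := In_nth xs x a Hx; by exists n.
pose idx := fun x => proj1_sig (constructive_indefinite_description _ (idxP x)).
have idxS : forall x, List.In x xs -> List.nth (idx x) xs a = x.
  move=> x; exact: (proj2_sig (constructive_indefinite_description _ (idxP x))).
pose ren := fun t : term ar A => subst (fun x => Var ar (idx x)) t.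
pose q := QId (List.map (fun i : I => (ren (proj1_sig i).1, ren (proj1_sig i).2)) l) (ren (Var ar a), ren (Var ar b)).
have Hq : forall B, L B -> sat_qi B q.
  move=> B LB u Hp.
  have Hr : forall t, eval u (ren t) = eval (fun x => u (idx x)) t by move=> t; rewrite /ren eval_subst.
  change (eval u (ren (Var ar a)) = eval u (ren (Var ar b))); rewrite !Hr.
  apply: (Hl B LB) => i Hi.
  rewrite -!Hr; apply: (Hp (ren (proj1_sig i).1, ren (proj1_sig i).2)).
  apply/in_map_iff; by exists i.
have := HA q Hq (fun n => List.nth n xs a).
have Hren : forall t, (forall x, List.In x (vars t) -> List.In x xs) ->
   eval (fun n => List.nth n xs a) (ren t) = eval (fun x => x) t.
  move=> t Ht; rewrite eval_subst /=; apply: eval_agree => x Hx; apply: idxS; exact: Ht.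
move=> H; apply: nab.
have Ha : eval (fun n => List.nth n xs a) (ren (Var ar a)) = a by apply: idxS; left.
have Hb : eval (fun n => List.nth n xs a) (ren (Var ar b)) = b by apply: idxS; right; left.
rewrite -Ha -Hb; apply: H => p /in_map_iff [i [<- Hi]].
change (eval (fun n => List.nth n xs a) (ren (proj1_sig i).1) = eval (fun n => List.nth n xs a) (ren (proj1_sig i).2)).
rewrite !Hren; first exact: (proj2_sig i).
- move=> x Hx; right; right; apply/in_concat; exists (vars (proj1_sig i).1 ++ vars (proj1_sig i).2).
  split; first by apply/in_map_iff; exists i.
  by apply: in_or_app; right.
- move=> x Hx; right; right; apply/in_concat; exists (vars (proj1_sig i).1 ++ vars (proj1_sig i).2).
  split; first by apply/in_map_iff; exists i.
  by apply: in_or_app; left.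
Qed.

Lemma qc_qv {F} {ar : F -> nat} (L : class ar) : quasicompact L -> is_quasivariety (S (P L)).
Proof.
move=> HL; exists (fun q => forall B, L B -> sat_qi B q) => A; split.
  move=> HA q Hq; apply/sat_holds; apply: (@SP_holds _ _ L _ _ _ _ _ _ A HA) => B LB.
  apply/sat_holds; exact: Hq.
move=> HA.
pose J := {p : A * A | p.1 <> p.2}.
have sep : forall j : J, exists B, L B /\ exists v : A -> B, hom v /\ v (proj1_sig j).1 <> v (proj1_sig j).2.
  move=> j; have [B [v [LB [Hv Hne]]]] := separate L HL A HA _ _ (proj2_sig j).
  by exists B; split => //; exists v.
pose Bf := fun j => proj1_sig (constructive_indefinite_description _ (sep j)).
have HBf : forall j, L (Bf j) /\ exists v : A -> Bf j, hom v /\ v (proj1_sig j).1 <> v (proj1_sig j).2.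
  move=> j; exact: (proj2_sig (constructive_indefinite_description _ (sep j))).
pose vf := fun j => proj1_sig (constructive_indefinite_description _ (HBf j).2).
have Hvf : forall j, hom (vf j) /\ vf j (proj1_sig j).1 <> vf j (proj1_sig j).2.
  move=> j; exact: (proj2_sig (constructive_indefinite_description _ (HBf j).2)).
pose h := (fun x j => vf j x) : A -> prod_alg Bf.
have Hh : hom h.
  move=> f args; apply: functional_extensionality_dep => j; exact: (Hvf j).1.
have Hinj : injective h.
  move=> x y Hxy; apply: NNPP => nxy.
  pose j := (exist _ (x, y) nxy : J).
  apply: (Hvf j).2; exact: (f_equal (fun g => g j) Hxy).
pose PP := fun y : prod_alg Bf => exists x, h x = y.
have HP : Defs.closed PP.
  move=> f args Hargs.
  pose xs := fun i => proj1_sig (constructive_indefinite_description _ (Hargs i)).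
  have Hxs : forall i, h (xs i) = args i.
    move=> i; exact: (proj2_sig (constructive_indefinite_description _ (Hargs i))).
  exists (ops xs); rewrite Hh; f_equal; apply: functional_extensionality => i; exact: Hxs.
exists (prod_alg Bf), PP, HP; split.
  exists J, Bf; split; first by move=> j; exact: (HBf j).1.
  exists id; split => //; by exists id.
pose k := fun x => exist PP (h x) (ex_intro _ x erefl) : sub_alg HP.
exists k; split.
  move=> f args; apply: sig_inj => /=; exact: Hh.
pose g := fun y : sub_alg HP => proj1_sig (constructive_indefinite_description _ (proj2_sig y)).
have Hg : forall y, h (g y) = proj1_sig y.
  move=> y; exact: (proj2_sig (constructive_indefinite_description _ (proj2_sig y))).
exists g.
- move=> x; apply: Hinj; exact: Hg (k x).
- move=> y; apply: sig_inj; exact: Hg.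
Qed.

Lemma holds_mono {F} {ar : F -> nat} (A : algebra ar) X I (prem : I -> term ar X * term ar X)
  (Pi Pi' : I -> Prop) c :
  (forall i, Pi i -> Pi' i) -> holds_impl A prem Pi c -> holds_impl A prem Pi' c.
Proof. move=> HPi H v Hv; apply: H => i Hi; apply: Hv; exact: HPi. Qed.

Lemma finite_union (I : Type) n (Q : 'I_n -> list I -> Prop) :
  (forall i l l', (forall x, List.In x l -> List.In x l') -> Q i l -> Q i l') ->
  (forall i, exists l, Q i l) -> exists l, forall i, Q i l.
Proof.
move=> Hm H.
pose lf := fun i => proj1_sig (constructive_indefinite_description _ (H i)).
exists (List.concat (List.map lf (enum 'I_n))) => i.
apply: (Hm i (lf i)); last exact: (proj2_sig (constructive_indefinite_description _ (H i))).
move=> x Hx; apply/in_concat; exists (lf i); split => //; apply/in_map_iff; exists i; split => //.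
exact: In_enum.
Qed.

Lemma qv_qc {F} {ar : F -> nat} (L : class ar) : is_quasivariety (S (P L)) -> quasicompact L.
Proof.
move=> [Sigma HS] X I prem c Hall.
pose theta := fun t s : term ar X => exists l : list I, forall A, L A -> holds_impl A prem (fun i => List.In i l) (t, s).
have th_refl : forall t, theta t t by move=> t; exists nil => A LA v _.
have th_sym : forall t s, theta t s -> theta s t.
  move=> t s [l Hl]; exists l => A LA v Hv; symmetry; exact: (Hl A LA v Hv).
have th_trans : forall t s r, theta t s -> theta s r -> theta t r.
  move=> t s r [l1 H1] [l2 H2]; exists (l1 ++ l2) => A LA v Hv.
  rewrite (H1 A LA v); last by move=> i Hi; apply: Hv; apply: in_or_app; left.
  by apply: (H2 A LA v) => i Hi; apply: Hv; apply: in_or_app; right.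
have th_app : forall f (ts ss : 'I_(ar f) -> term ar X), (forall i, theta (ts i) (ss i)) ->
    theta (App ts) (App ss).
  move=> f ts ss H.
  have [l Hl] := @finite_union I (ar f) (fun i l => forall A, L A -> holds_impl A prem (fun k => List.In k l) (ts i, ss i))
     (fun i l l' Hll' H A LA => @holds_mono _ _ A _ _ prem _ _ _ Hll' (H A LA)) H.
  exists l => A LA v Hv /=; f_equal; apply: functional_extensionality => i; exact: (Hl i A LA v Hv).
pose Qc := {R : term ar X -> Prop | exists t, R = theta t}.
pose cls := fun t => exist (fun R => exists t0, R = theta t0) (theta t) (ex_intro _ t erefl) : Qc.
have cls_eq : forall t s, cls t = cls s -> theta t s.
  move=> t s E; have E1 := f_equal (@proj1_sig _ _) E; simpl in E1.
  have : theta s s := th_refl s. by rewrite -E1.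
have cls_eq2 : forall t s, theta t s -> cls t = cls s.
  move=> t s Hts; apply: sig_inj => /=; apply: functional_extensionality => r.
  apply: propositional_extensionality; split => H.
  - exact: th_trans (th_sym _ _ Hts) H.
  - exact: th_trans Hts H.
pose rep := fun R : Qc => proj1_sig (constructive_indefinite_description _ (proj2_sig R)).
have rep_spec : forall R, cls (rep R) = R.
  move=> R; apply: sig_inj => /=; symmetry.
  exact: (proj2_sig (constructive_indefinite_description _ (proj2_sig R))).
have th_rep : forall t, theta (rep (cls t)) t by move=> t; apply: cls_eq; rewrite rep_spec.
pose Q := @Algebra F ar Qc (fun f args => cls (App (fun i => rep (args i)))).
have evalQ : forall Y (u : Y -> Q) t, eval u t = cls (subst (fun y => rep (u y)) t).
  move=> Y u; elim=> [y|f ts IH] /=; first by rewrite rep_spec.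
  apply: cls_eq2; apply: th_app => i; rewrite IH; exact: th_rep.
have sub_rep : forall t, theta (subst (fun x => rep (cls (Var ar x))) t) t.
  by elim=> [x|f ts IH] /=; [exact: th_rep | exact: th_app].
have evalV : forall t, eval (fun x => cls (Var ar x) : Q) t = cls t.
  move=> t; rewrite evalQ; apply: cls_eq2; exact: sub_rep.
have list_union : forall (ps : list (term ar nat * term ar nat)) (r : nat -> term ar X),
    (forall p, List.In p ps -> theta (subst r p.1) (subst r p.2)) ->
    exists l, forall A, L A -> forall v : X -> A,
      (forall i, List.In i l -> eval v (prem i).1 = eval v (prem i).2) ->
      forall p, List.In p ps -> eval v (subst r p.1) = eval v (subst r p.2).
  move=> ps r; elim: ps => [|p ps IH] H; first by exists nil.
  have [l1 H1] := H p (or_introl erefl).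
  have [l2 H2] := IH (fun p' Hp' => H p' (or_intror Hp')).
  exists (l1 ++ l2) => A LA v Hv p' [<-|Hp'].
  - by apply: (H1 A LA v) => i Hi; apply: Hv; apply: in_or_app; left.
  - by apply: (H2 A LA v) => // i Hi; apply: Hv; apply: in_or_app; right.
have QSP : S (P L) Q.
  apply/HS => q Hq u Hp.
  pose r := fun y => rep (u y).
  have Hcls : forall p, List.In p (qi_prem q) -> theta (subst r p.1) (subst r p.2).
    by move=> p Hp'; apply: cls_eq; rewrite -!evalQ; exact: Hp.
  rewrite !evalQ; apply: cls_eq2.
  have [l Hl] := list_union (qi_prem q) r Hcls.
  exists l => A LA v Hv.
  have satA : sat_qi A q by apply: (proj1 (HS A) (L_SP L A LA)).
  have Hw : forall t, eval (fun n => eval v (r n)) t = eval v (subst r t) by move=> t; rewrite eval_subst.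
  rewrite /= -!Hw; apply: satA => p Hp'; rewrite !Hw; exact: Hl A LA v Hv p Hp'.
have HQ := @SP_holds _ _ L X I prem (fun _ => True) c Hall Q QSP.
have := HQ (fun x => cls (Var ar x)).
rewrite !evalV => Hc.
have Hpr : forall i, True -> eval (fun x => cls (Var ar x) : Q) (prem i).1 = eval (fun x => cls (Var ar x) : Q) (prem i).2.
  move=> i _; rewrite !evalV; apply: cls_eq2; exists (i :: nil) => A LA w Hw; apply: Hw; left.
  by [].
have [l Hl] := cls_eq _ _ (Hc Hpr).
exists l => A LA; exact: Hl.
Qed.

Theorem theorem4p6 (F : Type) (ar : F -> nat) (K : class ar) :
  (is_quasivariety (S (P (D K))) <-> quasicompact (D K)) /\
  (quasicompact (D K) <-> hyper_quasi_compact K).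
Proof.
split; last exact: part2.
split; [exact: qv_qc | exact: qc_qv].
Qed.
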